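(* Let $G$ and $H$ be two uncountable groups of the same regular cardinality $\gamma$. Then the balleans $\mathcal{B}(G)$ and $\mathcal{B}(H)$ are asymorphic.
   Context: For an infinite group $G$ with identity $e$, $\mathcal{B}(G)=(G,\mathcal{F},B)$ where $\mathcal{F}=\{A\subseteq G: e\in A, |A|<|G|\}$ and $B(g,A)=gA$. For balleans $(X_1,P_1,B_1)$, $(X_2,P_2,B_2)$ (sets with families of balls $B(x,\alpha)\subseteq X$ indexed by $x\in X,\alpha\in P$), a map $f:X_1\to X_2$ is a $\prec$-mapping if for every $\alpha\in P_1$ there is $\beta\in P_2$ with $f(B_1(x,\alpha))\subseteq B_2(f(x),\beta)$ for all $x\in X_1$; a bijection $f$ is an asymorphism if $f$ and $f^{-1}$ are $\prec$-mappings, and the balleans are then called asymorphic. *)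

(* Defs.v *)
From Stdlib Require Import Classical.

Set Implicit Arguments.

Record Group := {
  gcar :> Type;
  gmul : gcar -> gcar -> gcar;
  ginv : gcar -> gcar;
  gone : gcar;
  gmulA : forall x y z, gmul x (gmul y z) = gmul (gmul x y) z;
  gmul1l : forall x, gmul gone x = x;
  gmul1r : forall x, gmul x gone = x;
  gmulVl : forall x, gmul (ginv x) x = gone;
  gmulVr : forall x, gmul x (ginv x) = gone
}.

Definition card_le (A B : Type) : Prop :=
  exists f : A -> B, forall x y, f x = f y -> x = y.
Definition card_lt (A B : Type) : Prop := card_le A B /\ ~ card_le B A.
Definition card_eq (A B : Type) : Prop :=
  exists (f : A -> B) (g : B -> A),
    (forall x, g (f x) = x) /\ (forall y, f (g y) = y).

Definition uncountable (X : Type) : Prop := ~ card_le X nat.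

(** |X| is an infinite regular cardinal: X is infinite and X is not the
    union of fewer than |X| subsets each of cardinality less than |X|
    (i.e. cf |X| = |X|). *)
Definition regular_card (X : Type) : Prop :=
  card_le nat X /\
  forall (I : Type) (A : I -> X -> Prop),
    card_lt I X ->
    (forall i, card_lt {x : X | A i x} X) ->
    exists x : X, forall i, ~ A i x.

Record ballean := {
  bsupp : Type;
  bradii : Type;
  bball : bsupp -> bradii -> bsupp -> Prop  (* bball x a y  <->  y \in B(x,a) *)
}.

Definition prec_mapping (X1 X2 : ballean) (f : bsupp X1 -> bsupp X2) : Prop :=
  forall a : bradii X1, exists b : bradii X2,
    forall x y, bball X1 x a y -> bball X2 (f x) b (f y).

Definition asymorphism (X1 X2 : ballean) (f : bsupp X1 -> bsupp X2) : Prop :=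
  exists g : bsupp X2 -> bsupp X1,
    (forall x, g (f x) = x) /\ (forall y, f (g y) = y) /\
    prec_mapping X1 X2 f /\ prec_mapping X2 X1 g.

Definition asymorphic (X1 X2 : ballean) : Prop :=
  exists f, asymorphism X1 X2 f.

Definition group_radius (G : Group) : Type :=
  { A : G -> Prop | A (gone G) /\ card_lt {x : G | A x} G }.

Definition ballean_of_group (G : Group) : ballean :=
  {| bsupp := gcar G;
     bradii := group_radius G;
     bball := fun g A y => exists a, proj1_sig A a /\ y = gmul G g a |}.

(* Main.v *)
Require Import Defs.
From Stdlib Require Import Arith Classical ClassicalEpsilon FunctionalExtensionality PropExtensionality ProofIrrelevance.
From mathcomp Require Import ssreflect ssrfun ssrbool eqtype.
From mathcomp Require Import boolp classical_sets wochoice.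
Set Implicit Arguments.

Lemma my_zorn (T : Type) (P : (T -> Prop) -> Prop) :
  (forall F : (T -> Prop) -> Prop, (forall X, F X -> P X) ->
     (forall X Y, F X -> F Y -> (forall t, X t -> Y t) \/ (forall t, Y t -> X t)) ->
     P (fun t => exists X, F X /\ X t)) ->
  exists A, P A /\ forall B, (forall t, A t -> B t) -> (exists t, B t /\ ~ A t) -> ~ P B.
Proof.
move=> HP.
case: (@Zorn_bigcup T P) => [F FP Ftot|A [PA Amax]].
  have -> : (\bigcup_(X in F) X)%classic = (fun t => exists X, F X /\ X t).
    apply: funext => t; apply: propext; split.
      by case=> X FX Xt; exists X.
    by case=> X [FX Xt]; exists X.
  apply: HP; first by move=> X FX; apply: FP.
  move=> X Y FX FY; case: (Ftot X Y FX FY) => H; [left|right] => t; exact: H.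
exists A; split=> // B AB [t [Bt At]] PB.
apply: (Amax B) => //; split; first by move=> x; apply: AB.
by move=> BA; apply: At; apply: BA.
Qed.

Lemma my_wo (T : Type) : exists R : T -> T -> Prop,
  (forall P : T -> Prop, (exists x, P x) -> exists z, P z /\ forall y, P y -> R z y) /\
  (forall x y, R x y -> R y x -> x = y).
Proof.
elim/Peq: T => T.
have [R wo] := well_ordering_principle T.
have least : forall A : {pred T}, (exists x, x \in A) -> exists z, z \in A /\ forall y, y \in A -> R z y.
  move=> A [x xA]; have [z [[zin zlow] _]] := wo A (ex_intro _ x xA).
  by exists z; split.
have refl : forall x, R x x.
  move=> x; have [z [zin zlow]] := least (pred1 x) (ex_intro _ x (eqxx x)).
  move: zin => /eqP ezx; subst z; apply: zlow; by rewrite inE.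
exists (fun x y => R x y); split.
  move=> P [x Px].
  have [z [zin zlow]] := least [pred y | `[< P y >]] (ex_intro _ x (introT (asboolP _) Px)).
  exists z; split; first by move: zin => /asboolP.
  by move=> y Py; apply: zlow; apply/asboolP.
move=> x y Rxy Ryx.
have [z [[zin zlow] zuniq]] := wo (pred2 x y) (ex_intro _ x (introT orP (or_introl (eqxx x)))).
have ex : minimum_of R (pred2 x y) x.
  by split; [rewrite inE eqxx | move=> w; rewrite inE => /orP [/eqP -> | /eqP ->]].
have ey : minimum_of R (pred2 x y) y.
  split; [by rewrite inE eqxx orbT | move=> w; rewrite inE => /orP [/eqP -> | /eqP ->] //].
by rewrite -(zuniq _ ex) (zuniq _ ey).
Qed.

Lemma sig_inj (X : Type) (S : X -> Prop) (a b : {x | S x}) : proj1_sig a = proj1_sig b -> a = b.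
Proof. destruct a as [a pa], b as [b pb]; simpl; intros ->; f_equal; apply proof_irrelevance. Qed.

Lemma cle_refl A : card_le A A.
Proof. exists (fun x => x); auto. Qed.

Lemma cle_trans A B C : card_le A B -> card_le B C -> card_le A C.
Proof. intros [f hf] [g hg]; exists (fun x => g (f x)); auto. Qed.

Lemma clt_le A B C : card_le A B -> card_lt B C -> card_lt A C.
Proof.
intros hab [hbc nb]; split; [eapply cle_trans; eauto|].
intro hca; apply nb; eapply cle_trans; eauto.
Qed.

Lemma ceq_le A B : card_eq A B -> card_le A B.
Proof. intros [f [g [h1 h2]]]; exists f; intros x y e; rewrite <- (h1 x), <- (h1 y), e; auto. Qed.

Lemma ceq_sym A B : card_eq A B -> card_eq B A.
Proof. intros [f [g [h1 h2]]]; exists g, f; auto. Qed.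

Lemma clt_eq A B C : card_lt A B -> card_eq B C -> card_lt A C.
Proof.
intros [hab nb] hbc; split.
- apply (cle_trans hab); apply ceq_le; exact hbc.
- intro hca; apply nb; exact (cle_trans (ceq_le hbc) hca).
Qed.

Definition small (X : Type) (S : X -> Prop) := card_lt {x | S x} X.

Lemma cle_sub (X : Type) (S : X -> Prop) : card_le {x | S x} X.
Proof. exists (@proj1_sig _ _); apply sig_inj. Qed.

Lemma not_small_le (X : Type) (S : X -> Prop) : ~ small S -> card_le X {x | S x}.
Proof. intros h; apply NNPP; intro h2; apply h; split; auto; apply cle_sub. Qed.

Lemma small_inj (X Y : Type) (S : X -> Prop) (T : Y -> Prop) (f : X -> Y) :
  (forall x y, S x -> S y -> f x = f y -> x = y) -> (forall x, S x -> T (f x)) ->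
  card_lt {y | T y} Y -> card_le Y X -> small S.
Proof.
intros finj fST [hT nT] hYX; split; [apply cle_sub|].
intro hX; apply nT; eapply cle_trans; [exact hYX| eapply cle_trans; [exact hX|]].
exists (fun a => exist _ (f (proj1_sig a)) (fST _ (proj2_sig a))).
intros a b e; apply sig_inj; apply finj; [exact (proj2_sig a)|exact (proj2_sig b)|].
apply (f_equal (@proj1_sig _ _)) in e; exact e.
Qed.

Lemma small_sub (X : Type) (S T : X -> Prop) : (forall x, S x -> T x) -> small T -> small S.
Proof.
intros hST hT; apply small_inj with (T := T) (f := fun x => x); auto; apply cle_refl.
Qed.

Lemma full_not_small (X : Type) (S : X -> Prop) : (forall x, S x) -> ~ small S.
Proof.
intros hS [_ n]; apply n; exists (fun x => exist _ x (hS x)).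
intros x y e; apply (f_equal (@proj1_sig _ _)) in e; exact e.
Qed.

Lemma small_union (X : Type) (reg : regular_card X) (I : Type) (A : I -> X -> Prop) :
  card_lt I X -> (forall i, small (A i)) -> small (fun x => exists i, A i x).
Proof.
intros hI hA; split; [apply cle_sub|]; intros [j hj].
set (A' := fun i x => A i (proj1_sig (j x))).
destruct (proj2 reg I A' hI) as [x hx].
- intro i; apply small_inj with (T := A i) (f := fun x => proj1_sig (j x)).
  + intros a b _ _ e; apply hj, sig_inj; exact e.
  + intros a h; exact h.
  + exact (hA i).
  + apply cle_refl.
- destruct (proj2_sig (j x)) as [i hi]; exact (hx i hi).
Qed.

Lemma small_union2 (X : Type) (reg : regular_card X) (nX : card_lt nat X) (S T : X -> Prop) :
  small S -> small T -> small (fun x => S x \/ T x).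
Proof.
intros hS hT.
apply small_sub with (T := fun x => exists b : bool, (if b then S else T) x).
- intros x [h|h]; [exists true|exists false]; exact h.
- apply small_union; auto.
  + eapply clt_le; [|exact nX]. exists (fun b : bool => if b then 0 else 1).
    intros [|] [|]; simpl; congruence.
  + intros [|]; auto.
Qed.

Lemma small_single (X : Type) (nX : card_lt nat X) (g : X) : small (fun x => x = g).
Proof.
eapply clt_le; [|exact nX]. exists (fun _ => 0). intros a b _; apply sig_inj.
rewrite (proj2_sig a) (proj2_sig b); reflexivity.
Qed.

Lemma nat_small (X : Type) : regular_card X -> uncountable X -> card_lt nat X.
Proof. intros [h _] u; split; auto. Qed.

Definition wo_least (X : Type) (W : X -> X -> Prop) :=
  forall P : X -> Prop, (exists x, P x) -> exists z, P z /\ forall y, P y -> W z y.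
Definition antisym (X : Type) (W : X -> X -> Prop) := forall x y, W x y -> W y x -> x = y.

Lemma init_wo (X : Type) (reg : regular_card X) (nX : card_lt nat X) :
  exists W : X -> X -> Prop, wo_least W /\ antisym W /\ forall g, small (fun z => W z g).
Proof.
destruct (my_wo X) as [W0 [l0 a0]].
destruct (Classical_Prop.classic (exists c, ~ small (fun z => W0 z c))) as [[c0 hc0] | hall].
2:{ exists W0; split; [exact l0|split; [exact a0|]].
    intro g; apply NNPP; intro h; apply hall; exists g; exact h. }
destruct (l0 (fun c => ~ small (fun z => W0 z c)) (ex_intro _ c0 hc0)) as [c [hc cmin]].
assert (hS' : ~ small (fun z => W0 z c /\ z <> c)).
{ intro hs; apply hc.
  apply small_sub with (T := fun z => (W0 z c /\ z <> c) \/ z = c).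
  - intros z hz; destruct (Classical_Prop.classic (z = c)) as [e|ne]; [right; exact e|left; split; assumption].
  - apply small_union2; auto; apply small_single; auto. }
assert (below : forall z, W0 z c /\ z <> c -> small (fun y => W0 y z)).
{ intros z [hz nz]; apply NNPP; intro h; apply nz; apply a0; [exact hz| exact (cmin z h)]. }
destruct (not_small_le hS') as [j hj].
exists (fun x y => W0 (proj1_sig (j x)) (proj1_sig (j y))).
split; [|split].
- intros P [x Px].
  destruct (l0 (fun z => exists x, P x /\ proj1_sig (j x) = z) (ex_intro _ _ (ex_intro _ x (conj Px erefl)))) as [z [[x0 [Px0 e]] hz]].
  exists x0; split; [exact Px0|]. intros y Py. rewrite e. apply hz. exists y; split; auto.
- intros x y h1 h2. apply hj, sig_inj, a0; auto.
- intro g. apply small_inj with (T := fun z => W0 z (proj1_sig (j g))) (f := fun x => proj1_sig (j x)).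
  + intros a b _ _ e; apply hj, sig_inj; exact e.
  + intros x h; exact h.
  + exact (below _ (proj2_sig (j g))).
  + apply cle_refl.
Qed.

Notation "x ** y" := (gmul _ x y) (at level 40, left associativity).

Section GroupLemmas.
Variable G : Group.
Implicit Types x y z : G.

Lemma mulVK x y : ginv G x ** (x ** y) = y.
Proof. rewrite gmulA gmulVl gmul1l; reflexivity. Qed.
Lemma mulKV x y : x ** (ginv G x ** y) = y.
Proof. rewrite gmulA gmulVr gmul1l; reflexivity. Qed.
Lemma mulKr x y : (y ** x) ** ginv G x = y.
Proof. rewrite -gmulA gmulVr gmul1r; reflexivity. Qed.
Lemma mulVr x y : (y ** ginv G x) ** x = y.
Proof. rewrite -gmulA gmulVl gmul1r; reflexivity. Qed.
Lemma mul_canl x y z : x ** y = x ** z -> y = z.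
Proof. intro e. rewrite -(mulVK x y) -(mulVK x z) e; reflexivity. Qed.
Lemma inv_uniq x y : x ** y = gone G -> ginv G x = y.
Proof. intro e. rewrite -(gmul1r _ (ginv G x)) -e mulVK; reflexivity. Qed.
Lemma inv_inv x : ginv G (ginv G x) = x.
Proof. apply inv_uniq, gmulVl. Qed.
Lemma inv_mul x y : ginv G (x ** y) = ginv G y ** ginv G x.
Proof. apply inv_uniq. rewrite -gmulA (gmulA _ y) gmulVr gmul1l gmulVr; reflexivity. Qed.
Lemma inv_one : ginv G (gone G) = gone G.
Proof. apply inv_uniq, gmul1l. Qed.
Lemma inv_inj x y : ginv G x = ginv G y -> x = y.
Proof. intro e; rewrite -(inv_inv x) e inv_inv; reflexivity. Qed.

Definition subgrp (K : G -> Prop) :=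
  K (gone G) /\ (forall x y, K x -> K y -> K (x ** y)) /\ (forall x, K x -> K (ginv G x)).

Lemma sg_inv_iff K x : subgrp K -> (K (ginv G x) <-> K x).
Proof.
intros [h1 [h2 h3]]; split; intro h; [rewrite -(inv_inv x)|]; apply h3; exact h.
Qed.

Lemma sg_trans K x y z : subgrp K -> K (ginv G x ** y) -> K (ginv G y ** z) -> K (ginv G x ** z).
Proof.
intros hK h1 h2. destruct hK as [_ [hm _]].
replace (ginv G x ** z) with ((ginv G x ** y) ** (ginv G y ** z)); [apply hm; auto|].
rewrite -gmulA mulKV; reflexivity.
Qed.

Lemma sg_sym K x y : subgrp K -> K (ginv G x ** y) -> K (ginv G y ** x).
Proof.
intros hK h. destruct hK as [_ [_ hi]]. replace (ginv G y ** x) with (ginv G (ginv G x ** y)).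
- apply hi; exact h.
- rewrite inv_mul inv_inv; reflexivity.
Qed.

Fixpoint wrd (Z : G -> Prop) (n : nat) : G -> Prop :=
  match n with
  | 0 => fun x => x = gone G
  | S n => fun x => exists w s, wrd Z n w /\ (Z s \/ Z (ginv G s)) /\ x = w ** s
  end.

Definition gen (Z : G -> Prop) x := exists n, wrd Z n x.

Lemma gen_sub Z x : Z x -> gen Z x.
Proof. intro h. exists 1, (gone G), x. split; [reflexivity|split; [left; exact h|]]. rewrite gmul1l; reflexivity. Qed.

Lemma gen_mul Z x y : gen Z x -> gen Z y -> gen Z (x ** y).
Proof.
intros hx [m hy]. revert y hy. induction m as [|m IH]; intros y hy; simpl in hy.
- rewrite hy gmul1r; exact hx.
- destruct hy as [w [s [hw [hs ->]]]].
  destruct (IH w hw) as [k hk]. exists (S k), (x ** w), s. split; [exact hk|split; [exact hs|]].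
  rewrite gmulA; reflexivity.
Qed.

Lemma gen_inv Z x : gen Z x -> gen Z (ginv G x).
Proof.
intros [n hx]. revert x hx. induction n as [|n IH]; intros x hx; simpl in hx.
- rewrite hx inv_one. exists 0; reflexivity.
- destruct hx as [w [s [hw [hs ->]]]]. rewrite inv_mul. apply gen_mul; [|apply IH; exact hw].
  exists 1, (gone G), (ginv G s). split; [reflexivity|split; [|rewrite gmul1l; reflexivity]].
  rewrite inv_inv. destruct hs; [right|left]; assumption.
Qed.

Lemma gen_subgrp Z : subgrp (gen Z).
Proof. split; [exists 0; reflexivity| split; [apply gen_mul|apply gen_inv]]. Qed.

Lemma gen_small (reg : regular_card G) (nG : card_lt nat G) Z : small Z -> small (gen Z).
Proof.
intro hS.
assert (hS' : small (fun s => Z s \/ Z (ginv G s))).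
{ apply small_union2; auto.
  apply small_inj with (T := Z) (f := ginv G); auto.
  - intros a b _ _ e; apply inv_inj; exact e.
  - apply cle_refl. }
assert (hw : forall n, small (wrd Z n)).
{ induction n as [|n IH]; simpl.
  - apply small_single; auto.
  - apply small_sub with (T := fun x => exists i : {w | wrd Z n w},
                             (fun x => exists s, (Z s \/ Z (ginv G s)) /\ x = proj1_sig i ** s) x).
    + intros x [w [s [hw [hs ->]]]]. exists (exist _ w hw), s; split; auto.
    + apply small_union; auto.
      intros [w hw']; simpl.
      apply small_inj with (T := fun s => Z s \/ Z (ginv G s)) (f := fun x => ginv G w ** x); auto.
      * intros a b _ _ e. apply mul_canl in e; exact e.
      * intros x [s [hs ->]]. rewrite mulVK; exact hs.
      * apply cle_refl. }
apply small_union; auto.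
Qed.

Definition rep (K : G -> Prop) (x : G) : G :=
  match excluded_middle_informative (K x) with
  | left _ => gone G
  | right _ => epsilon (inhabits x) (fun y => K (ginv G x ** y))
  end.

Lemma rep_in K x : subgrp K -> K (ginv G x ** rep K x).
Proof.
intro hK. unfold rep. destruct (excluded_middle_informative (K x)) as [h|h].
- rewrite gmul1r. apply hK; exact h.
- apply epsilon_spec. exists x. rewrite gmulVl. apply hK.
Qed.

Lemma rep_eq K x y : subgrp K -> K (ginv G x ** y) -> rep K x = rep K y.
Proof.
intros hK h. unfold rep.
destruct (excluded_middle_informative (K x)) as [hx|hx];
destruct (excluded_middle_informative (K y)) as [hy|hy]; auto.
- exfalso; apply hy. replace y with (x ** (ginv G x ** y)); [apply hK; auto|apply mulKV].
- exfalso; apply hx. replace x with (y ** (ginv G y ** x)); [apply hK; auto|apply mulKV].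
  apply sg_sym; auto.
- assert (e : (fun z => K (ginv G x ** z)) = (fun z => K (ginv G y ** z))).
  { apply functional_extensionality; intro z; apply propositional_extensionality; split; intro hz.
    - apply sg_trans with (y := x); auto; apply sg_sym; auto.
    - apply sg_trans with (y := y); auto. }
  rewrite e. f_equal. apply proof_irrelevance.
Qed.

Lemma rep_K K x : K x -> rep K x = gone G.
Proof. intro h. unfold rep. destruct (excluded_middle_informative (K x)); [reflexivity|contradiction]. Qed.

Lemma rep_idem K x : subgrp K -> rep K (rep K x) = rep K x.
Proof. intro hK. symmetry. apply rep_eq; auto. apply rep_in; auto. Qed.

Lemma rep_coset K x y : subgrp K -> rep K x = rep K y -> K (ginv G x ** y).
Proof.
intros hK e. apply sg_trans with (y := rep K x); [auto|apply rep_in; auto|].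
rewrite e. apply sg_sym; auto. apply rep_in; auto.
Qed.

Lemma coset_inj (reg : regular_card G) (nG : card_lt nat G) K : subgrp K -> small K ->
  exists rho : G -> G, (forall x, rep K (rho x) = rho x) /\
                       (forall x y, K (ginv G (rho x) ** rho y) -> x = y).
Proof.
intros hK sK.
assert (hT : ~ small (fun t => rep K t = t)).
{ intro hs. apply (@full_not_small G (fun x => exists i : {t | rep K t = t}, K (ginv G (proj1_sig i) ** x))).
  - intro x. exists (exist (fun t => rep K t = t) (rep K x) (rep_idem x hK)); simpl. apply sg_sym; auto. apply rep_in; auto.
  - apply small_union; auto. intros [t ht]; simpl.
    apply small_inj with (T := K) (f := fun x => ginv G t ** x); auto.
    + intros a b _ _ e; apply mul_canl in e; exact e.
    + apply cle_refl. }
destruct (not_small_le hT) as [j hj].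
exists (fun x => proj1_sig (j x)). split.
- intro x; exact (proj2_sig (j x)).
- intros x y h. apply hj, sig_inj. rewrite -(proj2_sig (j x)) -(proj2_sig (j y)).
  apply rep_eq; auto.
Qed.

End GroupLemmas.
Arguments subgrp {G}.
Arguments rep {G}.
Arguments gen {G}.
Arguments wrd {G}.
Arguments mulVK {G}. Arguments mulKV {G}. Arguments mulKr {G}. Arguments mulVr {G}.
Arguments mul_canl {G}. Arguments inv_uniq {G}. Arguments inv_inv {G}. Arguments inv_mul {G}.
Arguments inv_one {G}. Arguments inv_inj {G}. Arguments gen_sub {G}. Arguments gen_subgrp {G}.
Arguments rep_K {G}.

Lemma SB (A B : Type) : card_le A B -> card_le B A -> card_eq A B.
Proof.
intros [f hf] [g hg].
set (Cn := fix Cn (n : nat) : A -> Prop :=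
       match n with 0 => fun a => ~ exists b, g b = a
                  | S n => fun a => exists a', Cn n a' /\ a = g (f a') end).
set (C := fun a => exists n, Cn n a).
assert (key : forall b, C (g b) -> exists a, C a /\ f a = b).
{ intros b [[|n] hn]; simpl in hn.
  - exfalso; apply hn; exists b; reflexivity.
  - destruct hn as [a' [ha' e]]. exists a'; split; [exists n; exact ha'|]. symmetry; apply hg; exact e. }
assert (key2 : forall a, C a -> C (g (f a))).
{ intros a [n hn]. exists (S n). simpl. exists a; split; auto. }
set (h := fun a => match excluded_middle_informative (C a) with
                   | left _ => f a
                   | right _ => epsilon (inhabits (f a)) (fun b => g b = a) end).
set (k := fun b => match excluded_middle_informative (C (g b)) with
                   | left _ => epsilon (inhabits (g b)) (fun a => C a /\ f a = b)
                   | right _ => g b end).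
exists h, k. split.
- intro a. unfold h. destruct (excluded_middle_informative (C a)) as [ca|ca].
  + unfold k. destruct (excluded_middle_informative (C (g (f a)))) as [c2|c2].
    * assert (s := epsilon_spec (inhabits (g (f a))) (fun a0 => C a0 /\ f a0 = f a) (ex_intro _ a (conj ca erefl))).
      destruct s as [_ s]. apply hf; exact s.
    * exfalso; apply c2, key2, ca.
  + assert (ex : exists b, g b = a).
    { apply NNPP; intro n; apply ca; exists 0; exact n. }
    assert (s := epsilon_spec (inhabits (f a)) (fun b => g b = a) ex).
    unfold k. destruct (excluded_middle_informative (C (g (epsilon (inhabits (f a)) (fun b => g b = a))))) as [c2|c2].
    * exfalso; apply ca. rewrite -s; exact c2.
    * exact s.
- intro b. unfold k. destruct (excluded_middle_informative (C (g b))) as [c2|c2].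
  + assert (s := epsilon_spec (inhabits (g b)) (fun a => C a /\ f a = b) (key b c2)).
    destruct s as [s1 s2]. unfold h.
    destruct (excluded_middle_informative (C (epsilon (inhabits (g b)) (fun a => C a /\ f a = b)))) as [c3|c3].
    * exact s2.
    * contradiction.
  + unfold h. destruct (excluded_middle_informative (C (g b))) as [c3|c3]; [contradiction|].
    apply hg. apply (epsilon_spec (inhabits (f (g b))) (fun b0 => g b0 = g b)). exists b; reflexivity.
Qed.

Lemma reg_transfer (G H : Type) : card_eq G H -> regular_card G -> regular_card H.
Proof.
intros hGH [hn hreg]. destruct hGH as [f [g [gf fg]]]. split.
- eapply cle_trans; [exact hn|]. exists f; intros x y e; rewrite -(gf x) -(gf y) e; reflexivity.
- intros I A hI hA.
  destruct (hreg I (fun i x => A i (f x))) as [x hx].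
  + apply clt_eq with (B := H); auto. exists g, f; auto.
  + intro i. apply small_inj with (T := A i) (f := f); auto.
    * intros a b _ _ e; rewrite -(gf a) -(gf b) e; reflexivity.
    * exists g; intros a b e; rewrite -(fg a) -(fg b) e; reflexivity.
  + exists (f x); exact hx.
Qed.

Definition incl (T : Type) (K K2 : T -> Prop) := forall x, K x -> K2 x.
Definition leastnot (T : Type) (W : T -> T -> Prop) (K : T -> Prop) (x : T) :=
  ~ K x /\ forall z, ~ K z -> W x z.

Lemma pred_ext (T : Type) (K K2 : T -> Prop) : incl K K2 -> incl K2 K -> K = K2.
Proof.
intros h1 h2; apply functional_extensionality; intro x; apply propositional_extensionality; split; auto.
Qed.

Lemma neq_witness (T : Type) (K K2 : T -> Prop) : incl K K2 -> K <> K2 -> exists z, K2 z /\ ~ K z.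
Proof.
intros h n. apply NNPP; intro hn. apply n, pred_ext; auto.
intros z hz. apply NNPP; intro nz; apply hn; exists z; auto.
Qed.

Lemma leastnot_uniq (T : Type) (W : T -> T -> Prop) (K : T -> Prop) x y :
  antisym W -> leastnot W K x -> leastnot W K y -> x = y.
Proof. intros a [h1 h2] [h3 h4]; apply a; auto. Qed.

Lemma leastnot_ex (T : Type) (W : T -> T -> Prop) (K : T -> Prop) g :
  wo_least W -> ~ K g -> exists x, leastnot W K x.
Proof.
intros wl hg. destruct (wl (fun x => ~ K x) (ex_intro _ g hg)) as [z [hz hmin]].
exists z; split; auto.
Qed.

Lemma chain_small (T : Type) (regT : regular_card T) (W : T -> T -> Prop)
  (Wl : wo_least W) (Wa : antisym W) (Ws : forall g, small (fun z => W z g))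
  (F : (T -> Prop) -> Prop) (Fs : forall K, F K -> small K)
  (Fc : forall K K2, F K -> F K2 -> incl K K2 \/ incl K2 K)
  (Fi : forall K K2, F K -> F K2 -> incl K K2 -> K <> K2 -> forall x, leastnot W K x -> K2 x)
  (g : T) (hg : forall K, F K -> ~ K g) :
  small (fun x => exists K, F K /\ K x).
Proof.
set (m := fun K : T -> Prop => epsilon (inhabits g) (fun x => leastnot W K x)).
assert (hm : forall K, F K -> leastnot W K (m K)).
{ intros K hK. apply epsilon_spec. apply leastnot_ex with (g := g); auto. }
apply small_sub with (T := fun x => exists i : {K | F K}, proj1_sig i x).
- intros x [K [hK hx]]. exists (exist _ K hK); exact hx.
- apply small_union; auto.
  + eapply clt_le; [|exact (Ws g)].
    exists (fun i => exist (fun z => W z g) (m (proj1_sig i)) (proj2 (hm _ (proj2_sig i)) g (hg _ (proj2_sig i)))).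
    intros [K hK] [K2 hK2] e. apply (f_equal (@proj1_sig _ _)) in e. simpl in e.
    apply sig_inj; simpl. apply NNPP; intro ne.
    destruct (Fc K K2 hK hK2) as [i|i].
    * apply (proj1 (hm K2 hK2)). rewrite -e. apply (Fi K K2); auto.
    * apply (proj1 (hm K hK)). rewrite e. apply (Fi K2 K); auto.
  + intros [K hK]; simpl; apply Fs; exact hK.
Qed.

Lemma cover_lemma (T : Type) (regT : regular_card T)
  (F : (T -> Prop) -> Prop) (Fs : forall K, F K -> small K)
  (Fc : forall K K2, F K -> F K2 -> incl K K2 \/ incl K2 K)
  (cov : forall x, exists K, F K /\ K x) (S : T -> Prop) :
  small S -> exists K, F K /\ incl S K.
Proof.
intro hS. apply NNPP; intro hn.
assert (hn' : forall K, F K -> exists a, S a /\ ~ K a).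
{ intros K hK. apply NNPP; intro h. apply hn. exists K; split; auto.
  intros a ha. apply NNPP; intro h2; apply h; exists a; auto. }
set (Kof := fun a : T => epsilon (inhabits (fun _ : T => True)) (fun K => F K /\ K a)).
assert (hK : forall a, F (Kof a) /\ Kof a a).
{ intro a. apply (epsilon_spec (inhabits (fun _ : T => True)) (fun K => F K /\ K a)). apply cov. }
apply (@full_not_small T (fun x => exists i : {a | S a}, Kof (proj1_sig i) x)).
- intro x. destruct (cov x) as [K [hF hx]]. destruct (hn' K hF) as [a [ha na]].
  exists (exist _ a ha); simpl. destruct (Fc (Kof a) K (proj1 (hK a)) hF) as [i|i].
  + exfalso; apply na, i, (proj2 (hK a)).
  + apply i; exact hx.
- apply small_union; auto. intros [a ha]; simpl. apply Fs, hK.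
Qed.

Inductive tok (G H : Group) : Type :=
| Lev : (G -> Prop) -> (H -> Prop) -> tok G H
| Gr : G -> H -> tok G H.
Arguments Lev {G H}.
Arguments Gr {G H}.

Section Obj.
Variables (G H : Group) (WG : G -> G -> Prop) (WH : H -> H -> Prop).

Definition valid (X : tok G H -> Prop) : Prop :=
  (forall K L, X (Lev K L) -> subgrp K /\ subgrp L /\ small K /\ small L) /\
  (forall K L K2 L2, X (Lev K L) -> X (Lev K2 L2) ->
       (incl K K2 /\ incl L L2) \/ (incl K2 K /\ incl L2 L)) /\
  (forall K L K2 L2, X (Lev K L) -> X (Lev K2 L2) -> incl K K2 -> incl L L2 ->
       (K <> K2 -> forall x, leastnot WG K x -> K2 x) /\
       (L <> L2 -> forall y, leastnot WH L y -> L2 y)) /\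
  (forall x u v, X (Gr x u) -> X (Gr x v) -> u = v) /\
  (forall x y u, X (Gr x u) -> X (Gr y u) -> x = y) /\
  (forall K L x u y v, X (Lev K L) -> X (Gr x u) -> X (Gr y v) ->
       (K (ginv G x ** y) <-> L (ginv H u ** v))) /\
  (forall K L, X (Lev K L) ->
       (forall x, K x -> exists u, X (Gr x u)) /\ (forall u, L u -> exists x, X (Gr x u))) /\
  (forall x u, X (Gr x u) -> exists K L, X (Lev K L) /\ K x /\ L u).

Lemma union_pair (F : (tok G H -> Prop) -> Prop)
  (Fc : forall X Y, F X -> F Y -> (forall t, X t -> Y t) \/ (forall t, Y t -> X t))
  X1 X2 t1 t2 : F X1 -> F X2 -> X1 t1 -> X2 t2 -> exists X, F X /\ X t1 /\ X t2.
Proof.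
intros h1 h2 e1 e2. destruct (Fc X1 X2 h1 h2) as [i|i].
- exists X2; auto.
- exists X1; auto.
Qed.

Lemma valid_union (F : (tok G H -> Prop) -> Prop) :
  (forall X, F X -> valid X) ->
  (forall X Y, F X -> F Y -> (forall t, X t -> Y t) \/ (forall t, Y t -> X t)) ->
  valid (fun t => exists X, F X /\ X t).
Proof.
intros Fv Fc.
assert (P2 : forall t1 t2, (exists X, F X /\ X t1) -> (exists X, F X /\ X t2) ->
             exists X, F X /\ X t1 /\ X t2).
{ intros t1 t2 [X1 [h1 e1]] [X2 [h2 e2]]. exact (union_pair F Fc X1 X2 t1 t2 h1 h2 e1 e2). }
assert (P3 : forall t1 t2 t3, (exists X, F X /\ X t1) -> (exists X, F X /\ X t2) ->
             (exists X, F X /\ X t3) -> exists X, F X /\ X t1 /\ X t2 /\ X t3).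
{ intros t1 t2 t3 a b c. destruct (P2 _ _ a b) as [X [hX [x1 x2]]].
  destruct (P2 _ _ (ex_intro _ X (conj hX x1)) c) as [Y [hY [y1 y3]]].
  destruct (Fc X Y hX hY) as [i|i].
  - exists Y; auto.
  - exists X; auto. }
split; [|split; [|split; [|split; [|split; [|split; [|split]]]]]].
- intros K L [X [hX e]]. exact (proj1 (Fv X hX) K L e).
- intros K L K2 L2 a b. destruct (P2 _ _ a b) as [X [hX [e1 e2]]].
  exact (proj1 (proj2 (Fv X hX)) K L K2 L2 e1 e2).
- intros K L K2 L2 a b. destruct (P2 _ _ a b) as [X [hX [e1 e2]]].
  exact (proj1 (proj2 (proj2 (Fv X hX))) K L K2 L2 e1 e2).
- intros x u v a b. destruct (P2 _ _ a b) as [X [hX [e1 e2]]].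
  exact (proj1 (proj2 (proj2 (proj2 (Fv X hX)))) x u v e1 e2).
- intros x y u a b. destruct (P2 _ _ a b) as [X [hX [e1 e2]]].
  exact (proj1 (proj2 (proj2 (proj2 (proj2 (Fv X hX))))) x y u e1 e2).
- intros K L x u y v a b c. destruct (P3 _ _ _ a b c) as [X [hX [e1 [e2 e3]]]].
  exact (proj1 (proj2 (proj2 (proj2 (proj2 (proj2 (Fv X hX)))))) K L x u y v e1 e2 e3).
- intros K L [X [hX e]].
  destruct (proj1 (proj2 (proj2 (proj2 (proj2 (proj2 (proj2 (Fv X hX))))))) K L e) as [d r].
  split.
  + intros x hx. destruct (d x hx) as [u hu]. exists u, X; auto.
  + intros u hu. destruct (r u hu) as [x hx]. exists x, X; auto.
- intros x u [X [hX e]].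
  destruct (proj2 (proj2 (proj2 (proj2 (proj2 (proj2 (proj2 (Fv X hX))))))) x u e) as [K [L [h1 h2]]].
  exists K, L; split; [exists X; auto| exact h2].
Qed.

End Obj.

Section Alg.
Variable G : Group.
Lemma alg1 (a b c d e : G) : ginv G (a ** b ** c) ** (a ** d ** e) = ginv G c ** (ginv G b ** d) ** e.
Proof. rewrite !inv_mul -!gmulA. f_equal. f_equal. rewrite (gmulA _ (ginv G a)) gmulVl gmul1l. reflexivity. Qed.
Lemma alg2 (a b c : G) : ginv G (a ** b) ** (a ** c) = ginv G b ** c.
Proof. rewrite inv_mul -gmulA mulVK. reflexivity. Qed.
Lemma conj_sub (L : G -> Prop) a b m : subgrp L -> L a -> L b -> (L (ginv G a ** m ** b) <-> L m).
Proof.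
intros [h1 [h2 h3]] ha hb. split; intro h.
- replace m with (a ** (ginv G a ** m ** b) ** ginv G b).
  + apply h2; [apply h2|apply h3]; auto.
  + rewrite -gmulA mulKr mulKV. reflexivity.
- apply h2; [apply h2; [apply h3|]|]; auto.
Qed.
Lemma inv_mul_one (a b : G) : ginv G a ** b = gone G -> a = b.
Proof. intro e. rewrite -(mulKV a b) e gmul1r. reflexivity. Qed.
Lemma sg_one (K : G -> Prop) a : subgrp K -> K (ginv G a ** a).
Proof. intro h; rewrite gmulVl; apply h. Qed.
Lemma sg_mem (K : G -> Prop) a b : subgrp K -> K a -> K b -> K (ginv G a ** b).
Proof. intros h ha hb; apply h; [apply h|]; auto. Qed.
End Alg.
Arguments alg1 {G}. Arguments alg2 {G}. Arguments conj_sub {G}. Arguments inv_mul_one {G}.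
Arguments sg_one {G}. Arguments sg_mem {G}.

Section Ext.
Variables (G H : Group) (WG : G -> G -> Prop) (WH : H -> H -> Prop).
Variables (phi : G -> H) (psi : H -> G).
Hypothesis psi_phi : forall x, psi (phi x) = x.
Hypothesis phi_psi : forall y, phi (psi y) = y.
Hypothesis regG : regular_card G.
Hypothesis regH : regular_card H.
Hypothesis nG : card_lt nat G.
Hypothesis nH : card_lt nat H.
Hypothesis WGa : antisym WG.
Hypothesis WHa : antisym WH.
Variable A : tok G H -> Prop.
Hypothesis vA : valid WG WH A.

Definition Kstar (x : G) := exists K L, A (Lev K L) /\ K x.
Definition Lstar (u : H) := exists K L, A (Lev K L) /\ L u.

Lemma v1 K L : A (Lev K L) -> subgrp K /\ subgrp L /\ small K /\ small L.
Proof. apply vA. Qed.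
Lemma v2 K L K2 L2 : A (Lev K L) -> A (Lev K2 L2) ->
       (incl K K2 /\ incl L L2) \/ (incl K2 K /\ incl L2 L).
Proof. apply vA. Qed.
Lemma v3 K L K2 L2 : A (Lev K L) -> A (Lev K2 L2) -> incl K K2 -> incl L L2 ->
       (K <> K2 -> forall x, leastnot WG K x -> K2 x) /\
       (L <> L2 -> forall y, leastnot WH L y -> L2 y).
Proof. apply vA. Qed.
Lemma v4 x u v : A (Gr x u) -> A (Gr x v) -> u = v.
Proof. apply vA. Qed.
Lemma v5 x y u : A (Gr x u) -> A (Gr y u) -> x = y.
Proof. apply vA. Qed.
Lemma v6 K L x u y v : A (Lev K L) -> A (Gr x u) -> A (Gr y v) ->
       (K (ginv G x ** y) <-> L (ginv H u ** v)).
Proof. apply vA. Qed.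
Lemma v7 K L : A (Lev K L) ->
       (forall x, K x -> exists u, A (Gr x u)) /\ (forall u, L u -> exists x, A (Gr x u)).
Proof. apply vA. Qed.
Lemma v8 x u : A (Gr x u) -> exists K L, A (Lev K L) /\ K x /\ L u.
Proof. apply vA. Qed.

Definition fK (x : G) : H := epsilon (inhabits (gone H)) (fun u => A (Gr x u)).
Definition gK (u : H) : G := epsilon (inhabits (gone G)) (fun x => A (Gr x u)).

Lemma fK_spec x : Kstar x -> A (Gr x (fK x)).
Proof.
intros [K [L [hA hx]]]. apply (epsilon_spec (inhabits (gone H)) (fun u => A (Gr x u))).
exact (proj1 (v7 hA) x hx).
Qed.
Lemma gK_spec u : Lstar u -> A (Gr (gK u) u).
Proof.
intros [K [L [hA hu]]]. apply (epsilon_spec (inhabits (gone G)) (fun x => A (Gr x u))).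
exact (proj2 (v7 hA) u hu).
Qed.
Lemma gr_K x u : A (Gr x u) -> Kstar x /\ Lstar u.
Proof. intro h. destruct (v8 h) as [K [L [hA [hx hu]]]]. split; exists K, L; auto. Qed.
Lemma gr_fK x u : A (Gr x u) -> u = fK x.
Proof. intro h. apply (v4 h). apply fK_spec. exact (proj1 (gr_K h)). Qed.
Lemma fK_L x : Kstar x -> Lstar (fK x).
Proof. intro h. exact (proj2 (gr_K (fK_spec h))). Qed.

Section WithLevel.
Variables (K0 : G -> Prop) (L0 : H -> Prop).
Hypothesis hK0 : A (Lev K0 L0).

Lemma Kstar_sub : subgrp Kstar.
Proof.
split; [|split].
- exists K0, L0; split; auto. apply (v1 hK0).
- intros x y [K [L [hA hx]]] [K2 [L2 [hA2 hy]]].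
  destruct (v2 hA hA2) as [[i _]|[i _]].
  + exists K2, L2; split; auto. apply (v1 hA2); auto.
  + exists K, L; split; auto. apply (v1 hA); auto.
- intros x [K [L [hA hx]]]. exists K, L; split; auto. apply (v1 hA); auto.
Qed.
Lemma Lstar_sub : subgrp Lstar.
Proof.
split; [|split].
- exists K0, L0; split; auto. apply (v1 hK0).
- intros x y [K [L [hA hx]]] [K2 [L2 [hA2 hy]]].
  destruct (v2 hA hA2) as [[_ i]|[_ i]].
  + exists K2, L2; split; auto. apply (v1 hA2); auto.
  + exists K, L; split; auto. apply (v1 hA); auto.
- intros x [K [L [hA hx]]]. exists K, L; split; auto. apply (v1 hA); auto.
Qed.
End WithLevel.

Section Build.
Variables (K0 : G -> Prop) (L0 : H -> Prop).
Hypothesis hK0 : A (Lev K0 L0).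
Hypothesis sK : small Kstar.
Hypothesis sL : small Lstar.
Variables (mG : G) (mH : H).
Hypothesis hmG : leastnot WG Kstar mG.
Hypothesis hmH : leastnot WH Lstar mH.
Variables (rhoG : G -> G) (rhoH : H -> H).
Hypothesis rG1 : forall x, rep Kstar (rhoG x) = rhoG x.
Hypothesis rG2 : forall x y, Kstar (ginv G (rhoG x) ** rhoG y) -> x = y.
Hypothesis rH1 : forall x, rep Lstar (rhoH x) = rhoH x.
Hypothesis rH2 : forall x y, Lstar (ginv H (rhoH x) ** rhoH y) -> x = y.

Let sgK := Kstar_sub hK0.
Let sgL := Lstar_sub hK0.

Fixpoint KL (n : nat) : (G -> Prop) * (H -> Prop) :=
  match n with
  | 0 => (Kstar, Lstar)
  | S n => (gen (fun x => fst (KL n) x \/ x = mG \/ snd (KL n) (phi x) \/ exists z, fst (KL n) z /\ x = rhoG z),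
            gen (fun u => snd (KL n) u \/ u = mH \/ fst (KL n) (psi u) \/ exists z, snd (KL n) z /\ u = rhoH z))
  end.
Definition Kn n := fst (KL n).
Definition Ln n := snd (KL n).

Lemma cleHG : card_le H G.
Proof. exists psi; intros a b e; rewrite -(phi_psi a) -(phi_psi b) e; reflexivity. Qed.
Lemma cleGH : card_le G H.
Proof. exists phi; intros a b e; rewrite -(psi_phi a) -(psi_phi b) e; reflexivity. Qed.

Lemma small_img_G (Z : G -> Prop) : small Z -> small (fun x => exists z, Z z /\ x = rhoG z).
Proof.
intro hZ. apply small_inj with (T := Z) (f := fun x => epsilon (inhabits x) (fun z => Z z /\ x = rhoG z)); auto.
- intros a b ha hb e.
  rewrite (proj2 (epsilon_spec (inhabits a) (fun z => Z z /\ a = rhoG z) ha)).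
  rewrite (proj2 (epsilon_spec (inhabits b) (fun z => Z z /\ b = rhoG z) hb)).
  rewrite e; reflexivity.
- intros x hx. exact (proj1 (epsilon_spec (inhabits x) (fun z => Z z /\ x = rhoG z) hx)).
- apply cle_refl.
Qed.
Lemma small_img_H (Z : H -> Prop) : small Z -> small (fun x => exists z, Z z /\ x = rhoH z).
Proof.
intro hZ. apply small_inj with (T := Z) (f := fun x => epsilon (inhabits x) (fun z => Z z /\ x = rhoH z)); auto.
- intros a b ha hb e.
  rewrite (proj2 (epsilon_spec (inhabits a) (fun z => Z z /\ a = rhoH z) ha)).
  rewrite (proj2 (epsilon_spec (inhabits b) (fun z => Z z /\ b = rhoH z) hb)).
  rewrite e; reflexivity.
- intros x hx. exact (proj1 (epsilon_spec (inhabits x) (fun z => Z z /\ x = rhoH z) hx)).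
- apply cle_refl.
Qed.

Lemma KL_prop n : subgrp (Kn n) /\ subgrp (Ln n) /\ small (Kn n) /\ small (Ln n).
Proof.
induction n as [|n [h1 [h2 [h3 h4]]]].
- unfold Kn, Ln; simpl. auto.
- unfold Kn, Ln in *; simpl. split; [apply gen_subgrp|split; [apply gen_subgrp|split]].
  + apply gen_small; auto.
    repeat (apply small_union2; auto).
    * apply small_single; auto.
    * apply small_inj with (T := snd (KL n)) (f := phi); auto.
      -- intros a b _ _ e; rewrite -(psi_phi a) -(psi_phi b) e; reflexivity.
      -- apply cleHG.
    * apply small_img_G; auto.
  + apply gen_small; auto.
    repeat (apply small_union2; auto).
    * apply small_single; auto.
    * apply small_inj with (T := fst (KL n)) (f := psi); auto.
      -- intros a b _ _ e; rewrite -(phi_psi a) -(phi_psi b) e; reflexivity.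
      -- apply cleGH.
    * apply small_img_H; auto.
Qed.

Lemma Kn_S n : incl (Kn n) (Kn (S n)).
Proof. intros x h. unfold Kn; simpl. apply gen_sub. left; exact h. Qed.
Lemma Ln_S n : incl (Ln n) (Ln (S n)).
Proof. intros x h. unfold Ln; simpl. apply gen_sub. left; exact h. Qed.
Lemma Kn_le n m : n <= m -> incl (Kn n) (Kn m).
Proof. induction 1; intros x h; auto. apply Kn_S; auto. Qed.
Lemma Ln_le n m : n <= m -> incl (Ln n) (Ln m).
Proof. induction 1; intros x h; auto. apply Ln_S; auto. Qed.

Definition K' x := exists n, Kn n x.
Definition L' u := exists n, Ln n u.

Lemma K'_sub : subgrp K'.
Proof.
split; [|split].
- exists 0. apply (KL_prop 0).
- intros x y [n hx] [m hy]. exists (n + m). apply (KL_prop (n + m)).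
  + apply (Kn_le (Nat.le_add_r n m)); auto.
  + apply (Kn_le (Nat.le_add_l m n)); auto.
- intros x [n hx]. exists n. apply (KL_prop n); auto.
Qed.
Lemma L'_sub : subgrp L'.
Proof.
split; [|split].
- exists 0. apply (KL_prop 0).
- intros x y [n hx] [m hy]. exists (n + m). apply (KL_prop (n + m)).
  + apply (Ln_le (Nat.le_add_r n m)); auto.
  + apply (Ln_le (Nat.le_add_l m n)); auto.
- intros x [n hx]. exists n. apply (KL_prop n); auto.
Qed.
Lemma K'_small : small K'.
Proof. apply small_union; auto. intro n; apply (KL_prop n). Qed.
Lemma L'_small : small L'.
Proof.
apply small_union; auto. intro n; apply (KL_prop n).
Qed.
Lemma Kstar_K' x : Kstar x -> K' x.
Proof. intro h; exists 0; exact h. Qed.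
Lemma Lstar_L' x : Lstar x -> L' x.
Proof. intro h; exists 0; exact h. Qed.
Lemma mG_K' : K' mG.
Proof. exists 1. unfold Kn; simpl. apply gen_sub. right; left; reflexivity. Qed.
Lemma mH_L' : L' mH.
Proof. exists 1. unfold Ln; simpl. apply gen_sub. right; left; reflexivity. Qed.
Lemma phi_L' x : K' x -> L' (phi x).
Proof. intros [n h]. exists (S n). unfold Ln; simpl. apply gen_sub. right; right; left. rewrite psi_phi; exact h. Qed.
Lemma psi_K' u : L' u -> K' (psi u).
Proof. intros [n h]. exists (S n). unfold Kn; simpl. apply gen_sub. right; right; left. rewrite phi_psi; exact h. Qed.
Lemma rhoG_K' x : K' x -> K' (rhoG x).
Proof. intros [n h]. exists (S n). unfold Kn; simpl. apply gen_sub. right; right; right. exists x; split; auto. Qed.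
Lemma rhoH_L' x : L' x -> L' (rhoH x).
Proof. intros [n h]. exists (S n). unfold Ln; simpl. apply gen_sub. right; right; right. exists x; split; auto. Qed.

Definition TG x := K' x /\ rep Kstar x = x.
Definition TH u := L' u /\ rep Lstar u = u.

Lemma rhoG_inj x y : rhoG x = rhoG y -> x = y.
Proof. intro e. apply rG2. rewrite e. apply sg_one; auto. Qed.
Lemma rhoH_inj x y : rhoH x = rhoH y -> x = y.
Proof. intro e. apply rH2. rewrite e. apply sg_one; auto. Qed.

Lemma T_eq : card_eq {x | TG x} {u | TH u}.
Proof.
apply SB.
- exists (fun i => exist TH (rhoH (phi (proj1_sig i))) (conj (rhoH_L' (phi_L' (proj1 (proj2_sig i)))) (rH1 _))).
  intros a b e. apply (f_equal (@proj1_sig _ _)) in e; simpl in e.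
  apply sig_inj. apply rhoH_inj in e. rewrite -(psi_phi (proj1_sig a)) e psi_phi. reflexivity.
- exists (fun i => exist TG (rhoG (psi (proj1_sig i))) (conj (rhoG_K' (psi_K' (proj1 (proj2_sig i)))) (rG1 _))).
  intros a b e. apply (f_equal (@proj1_sig _ _)) in e; simpl in e.
  apply sig_inj. apply rhoG_inj in e. rewrite -(phi_psi (proj1_sig a)) e phi_psi. reflexivity.
Qed.

Section WithSig.
Variable sig : {x | TG x} -> {u | TH u}.
Variable tau : {u | TH u} -> {x | TG x}.
Hypothesis tau_sig : forall x, tau (sig x) = x.
Hypothesis sig_tau : forall u, sig (tau u) = u.

Definition sh (x : G) : H :=
  match excluded_middle_informative (TG x) with
  | left p => proj1_sig (sig (exist _ x p))
  | right _ => gone H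
  end.

Lemma sh_eq x (p : TG x) : sh x = proj1_sig (sig (exist _ x p)).
Proof.
unfold sh. destruct (excluded_middle_informative (TG x)) as [q|q]; [|contradiction].
f_equal. f_equal. f_equal. apply proof_irrelevance.
Qed.

Lemma sh_T x : TG x -> TH (sh x).
Proof. intro p. rewrite (sh_eq p). exact (proj2_sig _). Qed.
Lemma sh_inj x y : TG x -> TG y -> sh x = sh y -> x = y.
Proof.
intros p q e. rewrite (sh_eq p) (sh_eq q) in e. apply sig_inj in e.
apply (f_equal tau) in e. rewrite !tau_sig in e. apply (f_equal (@proj1_sig _ _)) in e. exact e.
Qed.
Lemma sh_surj u : TH u -> exists x, TG x /\ sh x = u.
Proof.
intro p. exists (proj1_sig (tau (exist _ u p))). split; [exact (proj2_sig _)|].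
rewrite (sh_eq (proj2_sig (tau (exist _ u p)))).
replace (exist TG (proj1_sig (tau (exist TH u p))) (proj2_sig (tau (exist TH u p)))) with (tau (exist _ u p)).
- rewrite sig_tau. reflexivity.
- apply sig_inj. reflexivity.
Qed.

Lemma T_e : TG (gone G).
Proof. split; [apply Kstar_K'; apply sgK|]. apply rep_K. apply sgK. Qed.

Definition cc := ginv H (sh (gone G)).
Definition fp (x : G) : H := cc ** sh (rep Kstar x) ** fK (ginv G (rep Kstar x) ** x).

Lemma rep_T x : K' x -> TG (rep Kstar x).
Proof.
intro h. split; [|apply rep_idem; exact sgK].
replace (rep Kstar x) with (x ** (ginv G x ** rep Kstar x)); [|apply mulKV].
apply K'_sub; auto. apply Kstar_K'. apply rep_in; exact sgK.
Qed.
Lemma k_in x : Kstar (ginv G (rep Kstar x) ** x).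
Proof. apply sg_sym; [exact sgK|]. apply rep_in; exact sgK. Qed.

Lemma fp_L' x : K' x -> L' (fp x).
Proof.
intro h. unfold fp, cc. apply L'_sub; [apply L'_sub|].
- apply L'_sub. apply (proj1 (sh_T T_e)).
- apply (proj1 (sh_T (rep_T h))).
- apply Lstar_L'. apply fK_L. apply k_in.
Qed.

Lemma TH_eq u v : TH u -> TH v -> Lstar (ginv H u ** v) -> u = v.
Proof. intros [_ hu] [_ hv] h. rewrite -hu -hv. apply rep_eq; auto. Qed.

Lemma tree_star x y : K' x -> K' y -> (Kstar (ginv G x ** y) <-> Lstar (ginv H (fp x) ** fp y)).
Proof.
intros hx hy. unfold fp. rewrite alg1.
rewrite (@conj_sub H Lstar _ _ _ sgL (fK_L (k_in x)) (fK_L (k_in y))).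
split; intro h.
- rewrite (rep_eq _ _ sgK h). apply sg_one; exact sgL.
- apply rep_coset; [exact sgK|]. apply sh_inj; [apply rep_T; auto|apply rep_T; auto|].
  apply TH_eq; auto; apply sh_T, rep_T; auto.
Qed.

Lemma same_rep x y : rep Kstar x = rep Kstar y ->
  ginv G x ** y = ginv G (ginv G (rep Kstar x) ** x) ** (ginv G (rep Kstar y) ** y) /\
  ginv H (fp x) ** fp y = ginv H (fK (ginv G (rep Kstar x) ** x)) ** fK (ginv G (rep Kstar y) ** y).
Proof.
intro e. split.
- rewrite -e. rewrite -{1}(mulKV (rep Kstar x) x) -{1}(mulKV (rep Kstar x) y). rewrite alg2. reflexivity.
- unfold fp. rewrite -e. rewrite alg2. reflexivity.
Qed.

Lemma fp_ext x : Kstar x -> fp x = fK x.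
Proof.
intro h. unfold fp, cc. rewrite (rep_K _ _ h) gmulVl gmul1l inv_one gmul1l. reflexivity.
Qed.

Lemma fp_inj x y : K' x -> K' y -> fp x = fp y -> x = y.
Proof.
intros hx hy e.
assert (hs : Kstar (ginv G x ** y)).
{ apply (proj2 (tree_star hx hy)). rewrite e. apply sg_one; exact sgL. }
assert (er := rep_eq _ _ sgK hs).
destruct (same_rep _ _ er) as [e1 e2].
rewrite e gmulVl in e2. symmetry in e2. apply inv_mul_one in e2.
assert (ek : ginv G (rep Kstar x) ** x = ginv G (rep Kstar y) ** y).
{ apply (v5 (u := fK (ginv G (rep Kstar x) ** x))); [apply fK_spec; apply k_in|].
  rewrite e2. apply fK_spec. apply k_in. }
rewrite -(mulKV (rep Kstar x) x) -(mulKV (rep Kstar y) y) ek er. reflexivity.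
Qed.

Lemma fp_surj u : L' u -> exists x, K' x /\ fp x = u.
Proof.
intro hu.
set (v := sh (gone G) ** u).
assert (hv : L' v). { apply L'_sub; auto. apply (proj1 (sh_T T_e)). }
set (s := rep Lstar v).
assert (hsT : TH s).
{ split; [|apply rep_idem; exact sgL].
  unfold s. replace (rep Lstar v) with (v ** (ginv H v ** rep Lstar v)); [|apply mulKV].
  apply L'_sub; auto. apply Lstar_L'. apply rep_in; exact sgL. }
destruct (sh_surj hsT) as [t [ht est]].
set (q := ginv H s ** v).
assert (hq : Lstar q). { apply sg_sym; [exact sgL|]. apply rep_in; exact sgL. }
assert (hqA := gK_spec hq).
set (k := gK q).
assert (hk : Kstar k). { exact (proj1 (gr_K hqA)). }
exists (t ** k). split.
- apply K'_sub; [exact (proj1 ht)|]. apply Kstar_K'; exact hk.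
- assert (er : rep Kstar (t ** k) = t).
  { transitivity (rep Kstar t); [symmetry; apply rep_eq; [exact sgK|]; rewrite mulVK; exact hk | exact (proj2 ht)]. }
  unfold fp. rewrite er mulVK.
  rewrite -(gr_fK hqA). rewrite est. unfold q, cc, v.
  rewrite -gmulA mulKV mulVK. reflexivity.
Qed.

Definition Bobj (t : tok G H) : Prop :=
  A t \/ t = Lev Kstar Lstar \/ t = Lev K' L' \/ exists x, K' x /\ t = Gr x (fp x).

Lemma A_lev_incl K L : A (Lev K L) -> incl K Kstar /\ incl L Lstar.
Proof. intro h. split; intros z hz; exists K, L; auto. Qed.

Lemma B_lev K L : Bobj (Lev K L) -> A (Lev K L) \/ (K = Kstar /\ L = Lstar) \/ (K = K' /\ L = L').
Proof.
intros [h|[h|[h|[x [_ h]]]]].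
- left; exact h.
- right; left. injection h as e1 e2. auto.
- right; right. injection h as e1 e2. auto.
- discriminate h.
Qed.

Lemma B_gr x u : Bobj (Gr x u) -> K' x /\ u = fp x.
Proof.
intros [h|[h|[h|[x' [hx' h]]]]].
- destruct (gr_K h) as [hk _]. split; [apply Kstar_K'; exact hk|].
  rewrite (gr_fK h). symmetry. apply fp_ext. exact hk.
- discriminate h.
- discriminate h.
- injection h as e1 e2. subst. auto.
Qed.

Lemma B_lev_incl K L : Bobj (Lev K L) -> incl K K' /\ incl L L'.
Proof.
intro h. destruct (B_lev h) as [a|[[-> ->]|[-> ->]]].
- destruct (A_lev_incl a) as [i1 i2]. split; intros z hz; [apply Kstar_K'; apply i1|apply Lstar_L'; apply i2]; exact hz.
- split; intros z hz; [apply Kstar_K'|apply Lstar_L']; exact hz.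
- split; intros z hz; exact hz.
Qed.

Lemma A_lev_least K L : A (Lev K L) ->
  (K <> Kstar -> forall x, leastnot WG K x -> Kstar x) /\
  (L <> Lstar -> forall y, leastnot WH L y -> Lstar y).
Proof.
intro a. destruct (A_lev_incl a) as [i1 i2]. split.
- intros ne x hx. destruct (neq_witness i1 ne) as [z [[Kq [Lq [aq hz]]] nz]].
  destruct (v2 a aq) as [[j1 j2]|[j1 j2]].
  + assert (ne2 : K <> Kq). { intro e; apply nz; rewrite e; exact hz. }
    exists Kq, Lq; split; auto. exact (proj1 (v3 a aq j1 j2) ne2 x hx).
  + exfalso; apply nz, j1, hz.
- intros ne x hx. destruct (neq_witness i2 ne) as [z [[Kq [Lq [aq hz]]] nz]].
  destruct (v2 a aq) as [[j1 j2]|[j1 j2]].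
  + assert (ne2 : L <> Lq). { intro e; apply nz; rewrite e; exact hz. }
    exists Kq, Lq; split; auto. exact (proj2 (v3 a aq j1 j2) ne2 x hx).
  + exfalso; apply nz, j2, hz.
Qed.

Lemma least_K' K : incl K Kstar -> (K <> Kstar -> forall x, leastnot WG K x -> Kstar x) ->
  forall x, leastnot WG K x -> K' x.
Proof.
intros i h x hx. destruct (Classical_Prop.classic (K = Kstar)) as [e|ne].
- subst K. rewrite (leastnot_uniq WGa hx hmG). exact mG_K'.
- apply Kstar_K'. exact (h ne x hx).
Qed.
Lemma least_L' L : incl L Lstar -> (L <> Lstar -> forall x, leastnot WH L x -> Lstar x) ->
  forall x, leastnot WH L x -> L' x.
Proof.
intros i h x hx. destruct (Classical_Prop.classic (L = Lstar)) as [e|ne].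
- subst L. rewrite (leastnot_uniq WHa hx hmH). exact mH_L'.
- apply Lstar_L'. exact (h ne x hx).
Qed.

Lemma K'_not_sub : ~ incl K' Kstar.
Proof. intro i. apply (proj1 hmG). apply i. exact mG_K'. Qed.

Lemma valid_B : valid WG WH Bobj.
Proof.
split; [|split; [|split; [|split; [|split; [|split; [|split]]]]]].
- intros K L h. destruct (B_lev h) as [a|[[-> ->]|[-> ->]]].
  + exact (v1 a).
  + split; [exact sgK|split; [exact sgL|split; assumption]].
  + split; [exact K'_sub|split; [exact L'_sub|split; [exact K'_small|exact L'_small]]].
- intros K L K2 L2 h h2.
  destruct (B_lev h) as [a|[[-> ->]|[-> ->]]]; destruct (B_lev h2) as [a2|[[-> ->]|[-> ->]]].
  + exact (v2 a a2).
  + left; exact (A_lev_incl a).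
  + left. destruct (A_lev_incl a) as [i1 i2]. split; intros z hz; [apply Kstar_K', i1|apply Lstar_L', i2]; exact hz.
  + right; exact (A_lev_incl a2).
  + left; split; intros z hz; exact hz.
  + left; split; intros z hz; [apply Kstar_K'|apply Lstar_L']; exact hz.
  + right. destruct (A_lev_incl a2) as [i1 i2]. split; intros z hz; [apply Kstar_K', i1|apply Lstar_L', i2]; exact hz.
  + right; split; intros z hz; [apply Kstar_K'|apply Lstar_L']; exact hz.
  + left; split; intros z hz; exact hz.
- intros K L K2 L2 h h2 i1 i2.
  destruct (B_lev h) as [a|[[-> ->]|[-> ->]]]; destruct (B_lev h2) as [a2|[[-> ->]|[-> ->]]].
  + exact (v3 a a2 i1 i2).
  + exact (A_lev_least a).
  + split; intros _.
    * apply least_K'; [exact (proj1 (A_lev_incl a))|exact (proj1 (A_lev_least a))].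
    * apply least_L'; [exact (proj2 (A_lev_incl a))|exact (proj2 (A_lev_least a))].
  + split; intro ne; exfalso; apply ne; apply pred_ext; auto.
    * exact (proj1 (A_lev_incl a2)).
    * exact (proj2 (A_lev_incl a2)).
  + split; intro ne; exfalso; apply ne; reflexivity.
  + split; intros _.
    * apply least_K'; [intros z hz; exact hz|intro ne; exfalso; apply ne; reflexivity].
    * apply least_L'; [intros z hz; exact hz|intro ne; exfalso; apply ne; reflexivity].
  + exfalso; apply K'_not_sub. intros z hz. apply (proj1 (A_lev_incl a2)), i1, hz.
  + exfalso; apply K'_not_sub; exact i1.
  + split; intro ne; exfalso; apply ne; reflexivity.
- intros x u v h1 h2. destruct (B_gr h1) as [_ ->]. destruct (B_gr h2) as [_ ->]. reflexivity.
- intros x y u h1 h2. destruct (B_gr h1) as [hx e1]. destruct (B_gr h2) as [hy e2].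
  apply fp_inj; auto. rewrite -e1 -e2. reflexivity.
- intros K L x u y v h hx hy. destruct (B_gr hx) as [kx ->]. destruct (B_gr hy) as [ky ->].
  destruct (B_lev h) as [a|[[-> ->]|[-> ->]]].
  + destruct (A_lev_incl a) as [i1 i2]. split; intro hh.
    * assert (hs : Kstar (ginv G x ** y)) by (apply i1; exact hh).
      assert (er := rep_eq _ _ sgK hs). destruct (same_rep _ _ er) as [e1 e2].
      rewrite e2. rewrite e1 in hh. apply (proj1 (v6 a (fK_spec (k_in x)) (fK_spec (k_in y)))). exact hh.
    * assert (hs : Lstar (ginv H (fp x) ** fp y)) by (apply i2; exact hh).
      assert (hs2 := proj2 (tree_star kx ky) hs).
      assert (er := rep_eq _ _ sgK hs2). destruct (same_rep _ _ er) as [e1 e2].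
      rewrite e1. rewrite e2 in hh. apply (proj2 (v6 a (fK_spec (k_in x)) (fK_spec (k_in y)))). exact hh.
  + exact (tree_star kx ky).
  + split; intros _.
    * apply (sg_mem _ _ _ L'_sub (fp_L' kx) (fp_L' ky)).
    * apply (sg_mem _ _ _ K'_sub kx ky).
- intros K L h. destruct (B_lev_incl h) as [i1 i2]. split.
  + intros x hx. exists (fp x). right; right; right. exists x; split; [apply i1; exact hx|reflexivity].
  + intros u hu. destruct (fp_surj (i2 u hu)) as [x [kx e]]. exists x. rewrite -e.
    right; right; right. exists x; split; [exact kx|reflexivity].
- intros x u h. destruct (B_gr h) as [kx ->]. exists K', L'.
  split; [right; right; left; reflexivity|]. split; [exact kx|exact (fp_L' kx)].
Qed.

Lemma ext_main : exists B, valid WG WH B /\ (forall t, A t -> B t) /\ exists t, B t /\ ~ A t.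
Proof.
exists Bobj. split; [exact valid_B|split].
- intros t h; left; exact h.
- exists (Lev K' L'). split; [right; right; left; reflexivity|].
  intro a. apply K'_not_sub. exact (proj1 (A_lev_incl a)).
Qed.

End WithSig.
End Build.

Hypothesis WGl : wo_least WG.
Hypothesis WHl : wo_least WH.
Hypothesis WGs : forall g, small (fun z => WG z g).
Hypothesis WHs : forall g, small (fun z => WH z g).

Lemma Kstar_small_of g : ~ Kstar g -> small Kstar.
Proof.
intro hg.
apply small_sub with (T := fun x => exists K, (exists L, A (Lev K L)) /\ K x).
{ intros x [K [L [a hx]]]. exists K; split; [exists L|]; auto. }
refine (chain_small regG WGl WGa WGs (fun K => exists L, A (Lev K L)) _ _ _ (g := g) _).
- intros K [L a]. exact (proj1 (proj2 (proj2 (v1 a)))).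
- intros K K2 [L a] [L2 a2]. destruct (v2 a a2) as [[i _]|[i _]]; [left|right]; exact i.
- intros K K2 [L a] [L2 a2] i ne x hx. destruct (v2 a a2) as [[i1 i2]|[i1 i2]].
  + exact (proj1 (v3 a a2 i1 i2) ne x hx).
  + exfalso; apply ne, pred_ext; auto.
- intros K [L a] hK. apply hg. exists K, L; auto.
Qed.

Lemma Lstar_small_of g : ~ Lstar g -> small Lstar.
Proof.
intro hg.
apply small_sub with (T := fun x => exists L, (exists K, A (Lev K L)) /\ L x).
{ intros x [K [L [a hx]]]. exists L; split; [exists K|]; auto. }
refine (chain_small regH WHl WHa WHs (fun L => exists K, A (Lev K L)) _ _ _ (g := g) _).
- intros L [K a]. exact (proj2 (proj2 (proj2 (v1 a)))).
- intros L L2 [K a] [K2 a2]. destruct (v2 a a2) as [[_ i]|[_ i]]; [left|right]; exact i.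
- intros L L2 [K a] [K2 a2] i ne x hx. destruct (v2 a a2) as [[i1 i2]|[i1 i2]].
  + exact (proj2 (v3 a a2 i1 i2) ne x hx).
  + exfalso; apply ne, pred_ext; auto.
- intros L [K a] hL. apply hg. exists K, L; auto.
Qed.

Lemma L_small_of_K : small Kstar -> small Lstar.
Proof.
intro sK. apply small_inj with (T := Kstar) (f := gK).
- intros a b ha hb e. apply (v4 (x := gK a)); [apply gK_spec; exact ha|]. rewrite e. apply gK_spec; exact hb.
- intros u hu. exact (proj1 (gr_K (gK_spec hu))).
- exact sK.
- exists phi; intros a b e; rewrite -(psi_phi a) -(psi_phi b) e; reflexivity.
Qed.

Lemma K_small_of_L : small Lstar -> small Kstar.
Proof.
intro sL. apply small_inj with (T := Lstar) (f := fK).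
- intros a b ha hb e. apply (v5 (u := fK a)); [apply fK_spec; exact ha|]. rewrite e. apply fK_spec; exact hb.
- intros u hu. exact (proj2 (gr_K (fK_spec hu))).
- exact sL.
- exists psi; intros a b e; rewrite -(phi_psi a) -(phi_psi b) e; reflexivity.
Qed.

Lemma maximal_full :
  (forall B, valid WG WH B -> (forall t, A t -> B t) -> (exists t, B t /\ ~ A t) -> False) ->
  (exists K L, A (Lev K L)) /\ (forall x, Kstar x) /\ (forall u, Lstar u).
Proof.
intro hmax.
assert (hlev : exists K L, A (Lev K L)).
{ apply NNPP; intro nl.
  assert (noA : forall t, ~ A t).
  { intros [K L|x u] h.
    - apply nl; exists K, L; exact h.
    - destruct (v8 h) as [K [L [a _]]]. apply nl; exists K, L; exact a. }
  set (oneG := fun x : G => x = gone G). set (oneH := fun u : H => u = gone H).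
  assert (sgo : forall (X : Group), subgrp (fun x : X => x = gone X)).
  { intro X. split; [reflexivity|split].
    - intros x y -> ->. apply gmul1l.
    - intros x ->. apply inv_one. }
  apply (hmax (fun t => t = Lev oneG oneH \/ t = Gr (gone G) (gone H))).
  - split; [|split; [|split; [|split; [|split; [|split; [|split]]]]]].
    + intros K L [h|h]; [|discriminate h]. injection h as -> ->.
      split; [apply sgo|split; [apply sgo|split; apply small_single; auto]].
    + intros K L K2 L2 [h|h] [h2|h2]; try discriminate.
      injection h as -> ->; injection h2 as -> ->. left; split; intros z hz; exact hz.
    + intros K L K2 L2 [h|h] [h2|h2]; try discriminate.
      injection h as -> ->; injection h2 as -> ->. split; intro ne; exfalso; apply ne; reflexivity.
    + intros x u v [h|h] [h2|h2]; try discriminate.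
      injection h as -> ->; injection h2 as -> . reflexivity.
    + intros x y u [h|h] [h2|h2]; try discriminate.
      injection h as -> ->; injection h2 as -> . reflexivity.
    + intros K L x u y v [h|h] [h2|h2] [h3|h3]; try discriminate.
      injection h as -> ->; injection h2 as -> ->; injection h3 as -> ->.
      unfold oneG, oneH. rewrite !gmulVl. split; reflexivity.
    + intros K L [h|h]; [|discriminate h]. injection h as -> ->. split.
      * intros x ->. exists (gone H). right; reflexivity.
      * intros u ->. exists (gone G). right; reflexivity.
    + intros x u [h|h]; [discriminate h|]. injection h as -> ->.
      exists oneG, oneH. split; [left; reflexivity|split; reflexivity].
  - intros t h; exfalso; exact (noA t h).
  - exists (Lev oneG oneH). split; [left; reflexivity|apply noA]. }
split; [exact hlev|]. destruct hlev as [K0 [L0 hK0]].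
assert (both : ~ (forall x, Kstar x) \/ ~ (forall u, Lstar u) -> False).
{ intro nf.
  assert (sKL : small Kstar /\ small Lstar).
  { destruct nf as [nf|nf].
    - destruct (not_all_ex_not _ _ nf) as [g hg].
      assert (sK := Kstar_small_of hg). split; [exact sK|exact (L_small_of_K sK)].
    - destruct (not_all_ex_not _ _ nf) as [g hg].
      assert (sL := Lstar_small_of hg). split; [exact (K_small_of_L sL)|exact sL]. }
  destruct sKL as [sK sL].
  assert (gK' : exists g, ~ Kstar g).
  { apply NNPP; intro h. apply (full_not_small (S := Kstar)); [|exact sK].
    intro x; apply NNPP; intro hx; apply h; exists x; exact hx. }
  assert (gL' : exists g, ~ Lstar g).
  { apply NNPP; intro h. apply (full_not_small (S := Lstar)); [|exact sL].
    intro x; apply NNPP; intro hx; apply h; exists x; exact hx. }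
  destruct gK' as [g1 hg1]. destruct gL' as [g2 hg2].
  destruct (leastnot_ex _ _ WGl hg1) as [mG hmG].
  destruct (leastnot_ex _ _ WHl hg2) as [mH hmH].
  destruct (coset_inj regG nG (Kstar_sub hK0) sK) as [rhoG [rG1 rG2]].
  destruct (coset_inj regH nH (Lstar_sub hK0) sL) as [rhoH [rH1 rH2]].
  destruct (T_eq hK0 mG mH rhoG rhoH rG1 rG2 rH1 rH2) as [sg [tau [h1 h2]]].
  destruct (ext_main hK0 sK sL hmG hmH sg tau h1 h2) as [B [vB [iB sB]]].
  exact (hmax B vB iB sB). }
split.
- intro x; apply NNPP; intro hx; apply both; left; intro h; apply hx, h.
- intro x; apply NNPP; intro hx; apply both; right; intro h; apply hx, h.
Qed.

Lemma asym_of_max :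
  (forall B, valid WG WH B -> (forall t, A t -> B t) -> (exists t, B t /\ ~ A t) -> False) ->
  asymorphic (ballean_of_group G) (ballean_of_group H).
Proof.
intro hmax. destruct (maximal_full hmax) as [hlev [fullK fullL]].
exists fK, gK. split; [|split; [|split]].
- intro x. apply (v5 (u := fK x)); [apply gK_spec; apply fK_L; apply fullK|apply fK_spec; apply fullK].
- intro y. apply (v4 (x := gK y)); [apply fK_spec; apply fullK|apply gK_spec; apply fullL].
- intros [A0 [hA0e hA0s]].
  destruct (cover_lemma regG (fun K => exists L, A (Lev K L))
     (fun K h => match h with ex_intro L a => proj1 (proj2 (proj2 (v1 a))) end)
     (fun K K2 h h2 => match h, h2 with ex_intro L a, ex_intro L2 a2 =>
        match v2 a a2 with or_introl (conj i _) => or_introl i | or_intror (conj i _) => or_intror i end end)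
     (fun x => match fullK x with ex_intro K (ex_intro L (conj a hx)) => ex_intro _ K (conj (ex_intro _ L a) hx) end)
     hA0s) as [K [[L a] i]].
  destruct (v1 a) as [sgK' [sgL' [_ sL']]].
  exists (exist (fun B : H -> Prop => B (gone H) /\ card_lt {x : H | B x} H) L (conj (proj1 sgL') sL')).
  intros x y [a0 [ha0 ->]]. simpl. exists (ginv H (fK x) ** fK (x ** a0)). split.
  + apply (proj1 (v6 a (fK_spec (fullK x)) (fK_spec (fullK (x ** a0))))). rewrite mulVK. apply i; exact ha0.
  + rewrite mulKV. reflexivity.
- intros [A0 [hA0e hA0s]].
  destruct (cover_lemma regH (fun L => exists K, A (Lev K L))
     (fun L h => match h with ex_intro K a => proj2 (proj2 (proj2 (v1 a))) end)
     (fun L L2 h h2 => match h, h2 with ex_intro K a, ex_intro K2 a2 =>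
        match v2 a a2 with or_introl (conj _ i) => or_introl i | or_intror (conj _ i) => or_intror i end end)
     (fun x => match fullL x with ex_intro K (ex_intro L (conj a hx)) => ex_intro _ L (conj (ex_intro _ K a) hx) end)
     hA0s) as [L [[K a] i]].
  destruct (v1 a) as [sgK' [sgL' [sK' _]]].
  exists (exist (fun B : G -> Prop => B (gone G) /\ card_lt {x : G | B x} G) K (conj (proj1 sgK') sK')).
  intros x y [a0 [ha0 ->]]. simpl. exists (ginv G (gK x) ** gK (x ** a0)). split.
  + apply (proj2 (v6 a (gK_spec (fullL x)) (gK_spec (fullL (x ** a0))))). rewrite mulVK. apply i; exact ha0.
  + rewrite mulKV. reflexivity.
Qed.

End Ext.

Theorem theorem3 (G H : Group) :
  uncountable G -> uncountable H ->
  card_eq G H -> regular_card G ->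
  asymorphic (ballean_of_group G) (ballean_of_group H).
Proof.
intros uG uH hGH regG.
assert (regH := reg_transfer hGH regG).
assert (nG := nat_small regG uG). assert (nH := nat_small regH uH).
destruct hGH as [phi [psi [psi_phi phi_psi]]].
destruct (init_wo regG nG) as [WG [WGl [WGa WGs]]].
destruct (init_wo regH nH) as [WH [WHl [WHa WHs]]].
destruct (@my_zorn (tok G H) (valid WG WH)) as [A [vA hmax]].
- intros F Fv Fc. apply valid_union; auto.
- apply (asym_of_max phi psi psi_phi phi_psi regG regH nG nH WGa WHa vA WGl WHl WGs WHs).
  intros B vB iB [t [Bt nAt]]. exact (hmax B iB (ex_intro _ t (conj Bt nAt)) vB).
Qed.
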